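(* Let $n,k$ be positive integers with $n \geq 2k+1$, and let $TT_n$ be the transitive (acyclic) tournament on $n$ vertices. Then \[ \mathrm{sinv}_k(TT_n) = \mathrm{sinv}'_k(TT_n) = \begin{cases} 2 & \text{if } 2k+1 \leq n < 3k,\\ 1 & \text{if } 3k \leq n. \end{cases} \]
   Context: A tournament is an orientation of a complete graph; $TT_n$ denotes the unique (up to isomorphism) acyclic tournament on $n$ vertices. For a digraph $D$ and $X \subseteq V(D)$, inverting $X$ means reversing the direction of every arc of $D$ with both endvertices in $X$. A digraph $D$ is $k$-arc-strong if for every partition $(V_1,V_2)$ of $V(D)$ into nonempty sets there are at least $k$ arcs from $V_1$ to $V_2$; it is $k$-strong if $|V(D)|\ge k+1$ and $D-S$ is strongly connected for every $S\subseteq V(D)$ with $|S|<k$. $\mathrm{sinv}'_k(D)$ (resp. $\mathrm{sinv}_k(D)$) is the minimum number of sets whose successive inversion transforms $D$ into a $k$-arc-strong (resp. $k$-strong) digraph. *)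

(* Defs.v *)
From mathcomp Require Import all_boot.
Set Implicit Arguments. Unset Strict Implicit. Unset Printing Implicit Defensive.

Definition digraph (T : finType) := rel T.

Definition TT (n : nat) : digraph 'I_n := fun i j => (i < j)%N.
Arguments TT n : clear implicits.

Definition invert (T : finType) (D : digraph T) (X : {set T}) : digraph T :=
  fun x y => if (x \in X) && (y \in X) then D y x else D x y.

Definition invert_seq (T : finType) (D : digraph T) (s : seq {set T}) : digraph T :=
  foldl (@invert T) D s.

Definition arcs_out (T : finType) (D : digraph T) (V1 : {set T}) : nat :=
  #|[set p : T * T | [&& p.1 \in V1, p.2 \notin V1 & D p.1 p.2]]|.

Definition k_arc_strong (T : finType) (k : nat) (D : digraph T) : Prop :=
  forall V1 : {set T}, V1 != set0 -> ~: V1 != set0 -> (k <= arcs_out D V1)%N.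

Definition strong_minus (T : finType) (D : digraph T) (S : {set T}) : Prop :=
  forall x y : T, x \notin S -> y \notin S ->
    connect [rel u v | [&& D u v, u \notin S & v \notin S]] x y.

Definition k_strong (T : finType) (k : nat) (D : digraph T) : Prop :=
  (k + 1 <= #|T|)%N /\
  forall S : {set T}, (#|S| < k)%N -> strong_minus D S.

Definition sinv_is (T : finType) (P : digraph T -> Prop) (D : digraph T) (m : nat) : Prop :=
  (exists s : seq {set T}, size s = m /\ P (invert_seq D s)) /\
  (forall s : seq {set T}, P (invert_seq D s) -> (m <= size s)%N).

Definition sinv_eq (T : finType) (k : nat) (D : digraph T) (m : nat) : Prop :=
  sinv_is (k_strong k) D m.
Definition sinv'_eq (T : finType) (k : nat) (D : digraph T) (m : nat) : Prop :=
  sinv_is (k_arc_strong k) D m.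

(* Main.v *)
Require Import Defs.
From mathcomp Require Import all_boot zify.
Set Implicit Arguments. Unset Strict Implicit. Unset Printing Implicit Defensive.

Lemma pig (T : finType) k (S : {set T}) (g : 'I_k -> T) :
  injective g -> (forall i, g i \in S) -> k <= #|S|.
Proof.
move=> gi gS.
have -> : k = #|g @: [set: 'I_k]| by rewrite card_imset // cardsT card_ord.
apply: subset_leq_card; apply/subsetP => x /imsetP [i _ ->]; exact: gS.
Qed.

Lemma ex_min n (P : pred 'I_n) x : P x -> exists2 y, P y & forall z, P z -> y <= z.
Proof. move=> Px; case: (@arg_minnP _ x P val Px) => y Py H; by exists y. Qed.

Lemma ex_max n (P : pred 'I_n) x : P x -> exists2 y, P y & forall z, P z -> z <= y.
Proof. move=> Px; case: (@arg_maxnP _ x P val Px) => y Py H; by exists y. Qed.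

Lemma card_interval n (A : {set 'I_n}) lo hi :
  (forall a, a \in A -> lo <= a < hi) -> #|A| <= hi - lo.
Proof.
move=> H; rewrite cardE -(size_map val) -(size_iota lo (hi - lo)).
apply: uniq_leq_size; first by rewrite map_inj_uniq ?enum_uniq //; exact: val_inj.
move=> x /mapP [a]; rewrite mem_enum => /H /andP [h1 h2] ->; rewrite mem_iota /=; apply/andP; split; lia.
Qed.

Lemma cross (T : finType) (e : rel T) (V : {set T}) x y :
  connect e x y -> x \in V -> y \notin V -> exists u w, [/\ u \in V, w \notin V & e u w].
Proof.
move/connectP => [p pth ->] {y}; elim: p x pth => [|z p IH] x /=.
  by move=> _ xV; rewrite /= xV.
move=> /andP [exz pth] xV lV; case: (boolP (z \in V)) => zV.
  exact: (IH z pth zV lV).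
by exists x, z.
Qed.

Lemma kstrong_arc (T : finType) k (D : digraph T) : k_strong k D -> k_arc_strong k D.
Proof.
move=> [hT hS] V1 ne1 ne2; rewrite leqNgt; apply/negP => lt.
set A := [set p : T * T | [&& p.1 \in V1, p.2 \notin V1 & D p.1 p.2]].
have hA : #|A| < k by [].
have [x0 [y0 [x0V y0V nD]]] : exists x0 y0, [/\ x0 \in V1, y0 \notin V1 & ~~ D x0 y0].
  case: (boolP [exists x0, exists y0, [&& x0 \in V1, y0 \notin V1 & ~~ D x0 y0]]).
    by move/existsP => [x0 /existsP [y0 /and3P [a b c]]]; exists x0, y0.
  move/existsPn => H; exfalso.
  have sub : setX V1 (~: V1) \subset A.
    apply/subsetP => [[a b]]; rewrite !inE /= => /andP [aV bV].
    have := H a; move/existsPn/(_ b); by rewrite aV bV /= negbK => ->.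
  have := subset_leq_card sub; rewrite cardsX => h.
  have := cardsC V1.
  have : 0 < #|V1| by rewrite card_gt0.
  have : 0 < #|~: V1| by rewrite card_gt0.
  move: hT; rewrite addn1 => hT; nia.
pose f (p : T * T) := if p.1 == x0 then p.2 else p.1.
set S := f @: A.
have hSk : #|S| < k by apply: leq_ltn_trans (leq_imset_card _ _) hA.
have x0S : x0 \notin S.
  apply/negP => /imsetP [[a b]]; rewrite !inE /= /f /= => /and3P [aV bV _].
  case: eqP => [ea E|ne E]; last by rewrite E in ne.
  by move: bV; rewrite -E x0V.
have y0S : y0 \notin S.
  apply/negP => /imsetP [[a b]]; rewrite !inE /= /f /= => /and3P [aV bV dab].
  case: eqP => [ea E|ne E].
    by move: nD; rewrite -ea E dab.
  by move: y0V; rewrite E aV.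
have := hS S hSk x0 y0 x0S y0S.
move/cross => /(_ V1 x0V y0V) [u [w [uV wV]]] /= /and3P [duw uS wS].
have pA : (u, w) \in A by rewrite inE /= uV wV duw.
have : f (u, w) \in S by apply: imset_f.
rewrite /f /=; case: eqP => _ h; [by rewrite h in wS | by rewrite h in uS].
Qed.

Lemma cut_out (T : finType) k (D : digraph T) (v : T) (B : {set T}) :
  (forall b, D v b -> b \in B) -> #|B| < k -> (exists w, w != v) -> ~ k_arc_strong k D.
Proof.
move=> HB hk [w hw] H.
have ne1 : [set v] != set0 by apply/set0Pn; exists v; rewrite inE.
have ne2 : ~: [set v] != set0 by apply/set0Pn; exists w; rewrite !inE.
have := H _ ne1 ne2; rewrite /arcs_out.
have sub : [set p : T * T | [&& p.1 \in [set v], p.2 \notin [set v] & D p.1 p.2]]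
   \subset (fun b => (v, b)) @: B.
  apply/subsetP => [[a b]]; rewrite !inE /= => /and3P [/eqP -> _ dvb].
  by apply: imset_f; apply: HB.
have := leq_trans (subset_leq_card sub) (leq_imset_card _ _); lia.
Qed.

Lemma cut_in (T : finType) k (D : digraph T) (v : T) (B : {set T}) :
  (forall a, D a v -> a \in B) -> #|B| < k -> (exists w, w != v) -> ~ k_arc_strong k D.
Proof.
move=> HB hk [w hw] H.
have ne1 : ~: [set v] != set0 by apply/set0Pn; exists w; rewrite !inE.
have ne2 : ~: ~: [set v] != set0 by rewrite setCK; apply/set0Pn; exists v; rewrite inE.
have := H _ ne1 ne2; rewrite /arcs_out.
have sub : [set p : T * T | [&& p.1 \in ~: [set v], p.2 \notin ~: [set v] & D p.1 p.2]]
   \subset (fun a => (a, v)) @: B.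
  apply/subsetP => [[a b]]; rewrite !inE /= negbK => /and3P [_ /eqP -> dav].
  by apply: imset_f; apply: HB.
have := leq_trans (subset_leq_card sub) (leq_imset_card _ _); lia.
Qed.

Lemma other n (v : 'I_n) : 2 <= n -> exists w : 'I_n, w != v.
Proof.
move=> h2.
have h0 : 0 < n by lia. have h1 : 1 < n by lia.
case: (eqVneq v (Ordinal h0)) => [->|ne]; last by exists (Ordinal h0); rewrite eq_sym.
by exists (Ordinal h1); apply/eqP => /(congr1 val).
Qed.

Lemma zero_inv n k : 0 < k -> 2 <= n -> ~ k_arc_strong k (TT n).
Proof.
move=> hk h2.
have hn : n.-1 < n by lia.
apply: (@cut_out _ _ _ (Ordinal hn) set0).
- move=> b; rewrite /TT /= inE; have := ltn_ord b; lia.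
- by rewrite cards0.
- exact: other.
Qed.

Lemma one_inv n k (X : {set 'I_n}) : 0 < k -> 2 * k + 1 <= n -> n < 3 * k ->
  ~ k_arc_strong k (invert (TT n) X).
Proof.
move=> hk h1 h3.
have DE : forall x y, invert (TT n) X x y = if (x \in X) && (y \in X) then y < x else x < y.
  by [].
case: (boolP [exists v, (v \notin X) && (v < k)]).
  move/existsP => [v /andP [vX vk]].
  apply: (@cut_in _ _ _ v [set a : 'I_n | a < v]).
  - by move=> a; rewrite DE (negbTE vX) andbF inE.
  - have := @card_interval n [set a : 'I_n | a < v] 0 v; rewrite subn0.
    move=> h; apply: leq_ltn_trans (h _) vk => a; rewrite inE; lia.
  - apply: other; lia.
move/existsPn => Ha.
case: (boolP [exists v, (v \notin X) && (n <= v + k)]).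
  move/existsP => [v /andP [vX vk]].
  apply: (@cut_out _ _ _ v [set b : 'I_n | v < b]).
  - by move=> a; rewrite DE (negbTE vX) inE.
  - have := @card_interval n [set b : 'I_n | v < b] v.+1 n.
    move=> h; apply: leq_ltn_trans (h _) _; last lia.
    move=> a; rewrite inE => ha; apply/andP; split => //.
  - apply: other; lia.
move/existsPn => Hb.
have h0 : 0 < n by lia.
have X0 : Ordinal h0 \in X.
  apply/negPn/negP => nX; have := Ha (Ordinal h0); by rewrite nX /= hk.
apply: (@cut_out _ _ _ (Ordinal h0) [set b : 'I_n | k <= b < n - k]).
- move=> b; rewrite DE X0 /=; case: (boolP (b \in X)) => bX /=; first by [].
  move=> _; have := Ha b; have := Hb b; rewrite bX /= inE; lia.
- have := @card_interval n [set b : 'I_n | k <= b < n - k] k (n - k).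
  move=> h; apply: leq_ltn_trans (h _) _; last lia.
  by move=> a; rewrite inE.
- apply: other; lia.
Qed.

Lemma pick_out n' k (S : {set 'I_n'.+1}) (a : nat) : a + k <= n'.+1 -> #|S| < k ->
  exists v : 'I_n'.+1, [/\ v \notin S, a <= v & v < a + k].
Proof.
move=> ha hk.
case: (boolP [exists v : 'I_n'.+1, [&& v \notin S, a <= v & v < a + k]]).
  by move/existsP => [v /and3P [x y z]]; exists v.
move/existsPn => H; exfalso.
have vi : forall i : 'I_k, nat_of_ord (inord (a + i) : 'I_n'.+1) = a + i.
  by move=> i; rewrite inordK //; have := ltn_ord i; lia.
have : k <= #|S|.
  apply: (@pig _ _ _ (fun i : 'I_k => inord (a + i) : 'I_n'.+1)).
    move=> i j /(congr1 val) /=; rewrite !vi => h; apply: val_inj => /=; lia.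
  move=> i; have := H (inord (a + i)); rewrite vi.
  have := ltn_ord i => hi.
  have -> : (a <= a + i) = true by lia.
  have -> : (a + i < a + k) = true by lia.
  by rewrite !andbT negbK.
lia.
Qed.

Definition rel_of (T : finType) (D : digraph T) (S : {set T}) : rel T :=
  [rel u v | [&& D u v, u \notin S & v \notin S]].

Lemma edge (T : finType) (D : digraph T) (S : {set T}) u v :
  u \notin S -> v \notin S -> D u v -> connect (rel_of D S) u v.
Proof. by move=> a b c; apply: connect1; rewrite /rel_of /= a b c. Qed.

Lemma big_strong n k (S : {set 'I_n}) :
  0 < k -> 3 * k <= n -> #|S| < k ->
  strong_minus (invert (TT n) [set i : 'I_n | (i < k) || (n - k <= i)]) S.
Proof.
case: n S => [|n'] S hk h3 hS; first by lia.
set D := invert _ _.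
have DE : forall x y : 'I_n'.+1, D x y =
   if ((x < k) || (n'.+1 - k <= x)) && ((y < k) || (n'.+1 - k <= y)) then y < x else x < y.
  by move=> x y; rewrite /D /invert /TT !inE.
have [f [fS f1 f2]] := @pick_out n' k S 0 ltac:(lia) hS.
have [m [mS m1 m2]] := @pick_out n' k S k ltac:(lia) hS.
have [l [lS l1 l2]] := @pick_out n' k S (n'.+1 - k) ltac:(lia) hS.
have lf : connect (rel_of D S) l f by apply: edge => //; rewrite DE; case: ifP; lia.
have fm : connect (rel_of D S) f m by apply: edge => //; rewrite DE; case: ifP; lia.
have ml : connect (rel_of D S) m l by apply: edge => //; rewrite DE; case: ifP; lia.
move=> x y xS yS.
apply: (connect_trans (y:=m)).
  have := ltn_ord x => hx.
  case: (ltnP x k) => h1.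
    by apply: edge => //; rewrite DE; case: ifP; lia.
  case: (ltnP x (n'.+1 - k)) => h2.
    apply: connect_trans (connect_trans _ lf) fm.
    by apply: edge => //; rewrite DE; case: ifP; lia.
  apply: connect_trans fm.
  by apply: edge => //; rewrite DE; case: ifP; lia.
have := ltn_ord y => hy.
case: (ltnP y k) => h1.
  apply: connect_trans ml _.
  by apply: edge => //; rewrite DE; case: ifP; lia.
case: (ltnP y (n'.+1 - k)) => h2.
  apply: connect_trans ml (connect_trans lf _).
  by apply: edge => //; rewrite DE; case: ifP; lia.
by apply: edge => //; rewrite DE; case: ifP; lia.
Qed.

Lemma pair_out n' k (S : {set 'I_n'.+1}) (a : nat) : 2 * k + a <= n'.+1 -> #|S| < k ->
  exists u v : 'I_n'.+1, [/\ u \notin S, v \notin S, odd u = odd a, odd v = ~~ odd a & u < v].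
Proof.
move=> ha hk.
case: (boolP [exists u : 'I_n'.+1, exists v : 'I_n'.+1,
   [&& u \notin S, v \notin S, odd u == odd a, odd v == ~~ odd a & u < v]]).
  move/existsP => [u /existsP [v /and5P [x y /eqP z /eqP w t]]]; by exists u, v.
move/existsPn => H; exfalso.
have vi : forall i : 'I_k, nat_of_ord (inord (i.*2 + a) : 'I_n'.+1) = i.*2 + a.
  by move=> i; rewrite inordK //; have := ltn_ord i; lia.
have vi' : forall i : 'I_k, nat_of_ord (inord (i.*2 + a).+1 : 'I_n'.+1) = (i.*2 + a).+1.
  by move=> i; rewrite inordK //; have := ltn_ord i; lia.
pose g (i : 'I_k) : 'I_n'.+1 :=
  if inord (i.*2 + a) \in S then inord (i.*2 + a) else inord (i.*2 + a).+1.
have : k <= #|S|.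
  apply: (@pig _ _ _ g).
    move=> i j; rewrite /g; case: ifP => _; case: ifP => _ /(congr1 val) /=;
      rewrite ?vi ?vi' => h; apply: val_inj => /=; lia.
  move=> i; rewrite /g; case: ifP => // hS.
  have := H (inord (i.*2 + a)); move/existsPn/(_ (inord (i.*2 + a).+1)).
  rewrite hS /= !vi !vi' /= oddD odd_double /= eqxx ltnSn.
  by rewrite !andbT; case: (odd a) => /=; rewrite andbT negbK.
lia.
Qed.

Lemma par_strong n k (D : digraph 'I_n) (S : {set 'I_n}) :
  (forall x y : 'I_n, D x y = if odd x == odd y then y < x else x < y) ->
  2 * k + 1 <= n -> #|S| < k -> strong_minus D S.
Proof.
case: n D S => [|n'] D S DE h1 hS; first by lia.
have [e1 [o1 [e1S o1S e1p o1p lt1]]] := @pair_out n' k S 0 ltac:(lia) hS.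
have [o2 [e2 [o2S e2S o2p e2p lt2]]] := @pair_out n' k S 1 ltac:(lia) hS.
move: e1p o1p o2p e2p => /= e1p o1p o2p e2p.
pose PE := [pred v : 'I_n'.+1 | (v \notin S) && ~~ odd v].
pose PO := [pred v : 'I_n'.+1 | (v \notin S) && odd v].
have [eb /andP [ebS ebp] ebm] := @ex_min _ PE e1 ltac:(by rewrite /= e1S e1p).
have [et /andP [etS etp] etm] := @ex_max _ PE e1 ltac:(by rewrite /= e1S e1p).
have [ob /andP [obS obp] obm] := @ex_min _ PO o1 ltac:(by rewrite /= o1S o1p).
have [ot /andP [otS otp] otm] := @ex_max _ PO o1 ltac:(by rewrite /= o1S o1p).
have same : forall u v : 'I_n'.+1, u \notin S -> v \notin S -> odd u = odd v -> v <= u ->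
    connect (rel_of D S) u v.
  move=> u v uS vS p le; case: (eqVneq u v) => [->|ne]; first exact: connect0.
  apply: edge => //; rewrite DE p eqxx.
  by rewrite ltn_neqAle le andbT eq_sym.
have diff : forall u v : 'I_n'.+1, u \notin S -> v \notin S -> odd u != odd v -> u < v ->
    connect (rel_of D S) u v.
  move=> u v uS vS p le; apply: edge => //; rewrite DE (negbTE p) //.
have eo : connect (rel_of D S) eb ot.
  apply: diff => //; first by rewrite (negbTE ebp) otp.
  exact: leq_ltn_trans (ebm e1 ltac:(by rewrite /= e1S e1p)) (leq_trans lt1 (otm o1 ltac:(by rewrite /= o1S o1p))).
have oe : connect (rel_of D S) ob et.
  apply: diff => //; first by rewrite (negbTE etp) obp.
  exact: leq_ltn_trans (obm o2 ltac:(by rewrite /= o2S o2p)) (leq_trans lt2 (etm e2 ltac:(by rewrite /= e2S e2p))).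
have oo : connect (rel_of D S) ot ob.
  apply: same => //; first by rewrite otp obp.
  exact: (obm ot) ltac:(by rewrite /= otS otp).
have ee : connect (rel_of D S) et eb.
  apply: same => //; first by rewrite (negbTE etp) (negbTE ebp).
  exact: (ebm et) ltac:(by rewrite /= etS etp).
move=> x y xS yS.
apply: (connect_trans (y:=eb)).
  case: (boolP (odd x)) => px.
    apply: connect_trans (connect_trans oe ee).
    apply: same => //; first by rewrite px obp.
    exact: (obm x) ltac:(by rewrite /= xS px).
  apply: same => //; first by rewrite (negbTE px) (negbTE ebp).
  exact: (ebm x) ltac:(by rewrite /= xS px).
apply: connect_trans eo _.
case: (boolP (odd y)) => py.
  apply: same => //; first by rewrite py otp.
  exact: (otm y) ltac:(by rewrite /= yS py).
apply: connect_trans oo (connect_trans oe _).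
apply: same => //; first by rewrite (negbTE py) (negbTE etp).
exact: (etm y) ltac:(by rewrite /= yS py).
Qed.

Theorem theorem5p9 (n k : nat) :
  (0 < k)%N -> (2 * k + 1 <= n)%N ->
  let v := if (n < 3 * k)%N then 2 else 1 in
  sinv_eq k (TT n) v /\ sinv'_eq k (TT n) v.
Proof.
move=> hk hn v.
have n2 : 2 <= n by lia.
have upper : exists s, size s = v /\ k_strong k (invert_seq (TT n) s).
  rewrite /v; case: ifP => h3.
  - exists [:: [set i : 'I_n | ~~ odd i]; [set i : 'I_n | odd i]]; split => //; split.
      by rewrite card_ord; lia.
    move=> S hS; apply: (@par_strong n k) => //.
    move=> x y; rewrite /invert_seq /= /invert /TT !inE.
    by case: (odd x); case: (odd y).
  - exists [:: [set i : 'I_n | (i < k) || (n - k <= i)]]; split => //; split.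
      by rewrite card_ord; lia.
    move=> S hS; apply: big_strong => //; lia.
have lower : forall s, k_arc_strong k (invert_seq (TT n) s) -> v <= size s.
  move=> s H; rewrite /v; case: ifP => h3.
  - case: s H => [|X [|Y s]] H //=.
      by exfalso; exact: (zero_inv hk n2 H).
    by exfalso; exact: (one_inv hk hn h3 H).
  - case: s H => [|X s] H //=.
    by exfalso; exact: (zero_inv hk n2 H).
split; split.
- exact: upper.
- by move=> s H; apply: lower; exact: kstrong_arc.
- by have [s [h1 h2]] := upper; exists s; split => //; exact: kstrong_arc.
- exact: lower.
Qed.
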